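(* Let $A_1\in\mathbb R^{n_1\times n_1}$, $A_2\in\mathbb R^{n_2\times n_2}$ be symmetric positive definite with spectra contained in $[\alpha_1,\beta_1]$ and $[\alpha_2,\beta_2]$ respectively ($0<\alpha_i\le\beta_i$), let $B\in\mathbb R^{n_1\times n_2}$, let $\epsilon>0$ and set $\kappa:=\frac{\beta_1+\beta_2}{\alpha_1+\alpha_2}$, assuming $\kappa\epsilon<1$. Let $A_i^{(h)}$, $h=0,\dots,\ell$, be the level-$h$ block-diagonal parts of $A_i$ (see context). Suppose matrices $\widetilde X^{(\ell)}$ and $\delta\widetilde X^{(h)}$, $h=\ell-1,\dots,0$, of size $n_1\times n_2$ are given, and define $$R^{(\ell)}:=A_1^{(\ell)}\widetilde X^{(\ell)}+\widetilde X^{(\ell)}A_2^{(\ell)}-B,$$ and, for $h=\ell-1,\dots,0$, with $\widetilde X^{(h+1)}:=\widetilde X^{(\ell)}+\delta\widetilde X^{(\ell-1)}+\dots+\delta\widetilde X^{(h+1)}$, $$\widetilde\Xi^{(h)}:=-(A_1^{(h)}-A_1^{(h+1)})\widetilde X^{(h+1)}-\widetilde X^{(h+1)}(A_2^{(h)}-A_2^{(h+1)}),\qquad R^{(h)}:=A_1^{(h)}\delta\widetilde X^{(h)}+\delta\widetilde X^{(h)}A_2^{(h)}-\widetilde\Xi^{(h)}.$$ Assume $\|R^{(\ell)}\|_F\le\epsilon\|B\|_F$ and $\|R^{(h)}\|_F\le\epsilon\|\widetilde\Xi^{(h)}\|_F$ for $h<\ell$. Then for every $h=0,\dots,\ell$,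 the matrix $\widetilde X^{(h)}:=\widetilde X^{(\ell)}+\delta\widetilde X^{(\ell-1)}+\dots+\delta\widetilde X^{(h)}$ satisfies $$A_1^{(h)}\widetilde X^{(h)}+\widetilde X^{(h)}A_2^{(h)}=B+R^{(\ell)}+\dots+R^{(h)},$$ and $$\|R^{(h)}\|_F\le\kappa\epsilon(1+\epsilon)(1+\kappa\epsilon)^{\ell-h-1}\|B\|_F.$$
   Context: For $i=1,2$, fix a sequence of nested partitions of $\{1,\dots,n_i\}$ into sets of contiguous indices at levels $h=0,1,\dots,\ell$: level $0$ is the trivial partition $\{1,\dots,n_i\}$, and each set at level $h+1$ is obtained by splitting a set of level $h$ into two contiguous parts (one of which may be empty). $A_i^{(h)}$ denotes the block-diagonal matrix obtained from $A_i$ by keeping the entries whose row and column indices lie in the same set of the level-$h$ partition and setting all other entries to zero; in particular $A_i^{(0)}=A_i$, and $A_i^{(h)}-A_i^{(h+1)}$ consists of the off-diagonal blocks uncovered at level $h+1$. $\|\cdot\|_F$ is the Frobenius norm. *)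

(* Defs.v *)
From HB Require Import structures.
From mathcomp Require Import all_boot all_order all_algebra.
Set Implicit Arguments. Unset Strict Implicit. Unset Printing Implicit Defensive.
Import Order.TTheory GRing.Theory Num.Theory.
Local Open Scope ring_scope.

Definition frob (R : rcfType) m n (M : 'M[R]_(m, n)) : R :=
  Num.sqrt (\sum_(i < m) \sum_(j < n) M i j ^+ 2).

Definition symmetric_mx (R : rcfType) n (A : 'M[R]_n) : Prop := A^T = A.

Definition posdef_mx (R : rcfType) n (A : 'M[R]_n) : Prop :=
  forall v : 'rV[R]_n, v != 0 -> 0 < (v *m A *m v^T) 0 0.

Definition spectrum_in (R : rcfType) n (A : 'M[R]_n) (a b : R) : Prop :=
  forall l : R, eigenvalue A l -> a <= l <= b.

(* A hierarchy of partitions of {0,..,n-1} at levels 0..ell, given by block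
   labels: at level h, indices i and j lie in the same set iff
   lab h i = lab h j.  Conditions:
   - each level-h partition consists of contiguous sets (labels nondecreasing);
   - level 0 is the trivial partition;
   - each set at level h+1 is contained in a set at level h, and each set at
     level h is split into (at most) two sets at level h+1 (one may be empty). *)
Definition nested_partitions n (ell : nat) (lab : nat -> 'I_n -> nat) : Prop :=
  [/\ forall h, h <= ell -> forall i j : 'I_n, (i <= j)%N -> (lab h i <= lab h j)%N,
      forall i j : 'I_n, lab 0%N i = lab 0%N j,
      forall h, h < ell -> forall i j : 'I_n,
          lab h.+1 i = lab h.+1 j -> lab h i = lab h j
    & forall h, h < ell -> forall i j k : 'I_n,
          lab h i = lab h j -> lab h j = lab h k ->
          [\/ lab h.+1 i = lab h.+1 j, lab h.+1 j = lab h.+1 k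
            | lab h.+1 i = lab h.+1 k]]%N.

Definition bdiag (R : rcfType) n (lab : nat -> 'I_n -> nat) (h : nat)
    (A : 'M[R]_n) : 'M[R]_n :=
  \matrix_(i, j) if lab h i == lab h j then A i j else 0.

Definition Xtil (R : rcfType) n1 n2 (ell : nat) (Xl : 'M[R]_(n1, n2))
    (dX : nat -> 'M[R]_(n1, n2)) (h : nat) : 'M[R]_(n1, n2) :=
  Xl + \sum_(h <= k < ell) dX k.

Definition Xitil (R : rcfType) n1 n2 (lab1 : nat -> 'I_n1 -> nat)
    (lab2 : nat -> 'I_n2 -> nat) (A1 : 'M[R]_n1) (A2 : 'M[R]_n2) (ell : nat)
    (Xl : 'M[R]_(n1, n2)) (dX : nat -> 'M[R]_(n1, n2)) (h : nat) : 'M[R]_(n1, n2) :=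
  - ((bdiag lab1 h A1 - bdiag lab1 h.+1 A1) *m Xtil ell Xl dX h.+1)
  - Xtil ell Xl dX h.+1 *m (bdiag lab2 h A2 - bdiag lab2 h.+1 A2).

Definition Resid (R : rcfType) n1 n2 (lab1 : nat -> 'I_n1 -> nat)
    (lab2 : nat -> 'I_n2 -> nat) (A1 : 'M[R]_n1) (A2 : 'M[R]_n2)
    (B : 'M[R]_(n1, n2)) (ell : nat)
    (Xl : 'M[R]_(n1, n2)) (dX : nat -> 'M[R]_(n1, n2)) (h : nat) : 'M[R]_(n1, n2) :=
  if h == ell then
    bdiag lab1 ell A1 *m Xl + Xl *m bdiag lab2 ell A2 - B
  else
    bdiag lab1 h A1 *m dX h + dX h *m bdiag lab2 h A2
    - Xitil lab1 lab2 A1 A2 ell Xl dX h.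

(* Main.v *)
Require Import Defs.
From HB Require Import structures.
From mathcomp Require Import all_boot all_order all_algebra.
From mathcomp Require Import ring lra zify.
From mathcomp Require Import complex.
Import Order.TTheory GRing.Theory Num.Theory.
Local Open Scope ring_scope.
Set Implicit Arguments. Unset Strict Implicit.

Definition ip {R : rcfType} m n (M N : 'M[R]_(m, n)) : R :=
  \sum_(i < m) \sum_(j < n) M i j * N i j.

Lemma frobE {R : rcfType} m n (M : 'M[R]_(m, n)) : frob M = Num.sqrt (ip M M).
Proof. by rewrite /frob /ip; congr (Num.sqrt _); do 2 (apply: eq_bigr => ? _); rewrite expr2. Qed.

Lemma ipC {R : rcfType} m n (M N : 'M[R]_(m, n)) : ip M N = ip N M.
Proof. by rewrite /ip; do 2 (apply: eq_bigr => ? _); rewrite mulrC. Qed.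

Lemma ipDl {R : rcfType} m n (M N P : 'M[R]_(m, n)) : ip (M + N) P = ip M P + ip N P.
Proof.
rewrite /ip -big_split; apply: eq_bigr => i _; rewrite -big_split.
by apply: eq_bigr => j _; rewrite !mxE mulrDl.
Qed.

Lemma ipZl {R : rcfType} m n a (M P : 'M[R]_(m, n)) : ip (a *: M) P = a * ip M P.
Proof.
rewrite /ip mulr_sumr; apply: eq_bigr => i _; rewrite mulr_sumr.
by apply: eq_bigr => j _; rewrite !mxE mulrA.
Qed.

Lemma ipNl {R : rcfType} m n (M P : 'M[R]_(m, n)) : ip (- M) P = - ip M P.
Proof. by rewrite -scaleN1r ipZl mulN1r. Qed.

Lemma ipDr {R : rcfType} m n (M N P : 'M[R]_(m, n)) : ip P (M + N) = ip P M + ip P N.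
Proof. by rewrite ipC ipDl !(ipC P). Qed.
Lemma ipZr {R : rcfType} m n a (M P : 'M[R]_(m, n)) : ip P (a *: M) = a * ip P M.
Proof. by rewrite ipC ipZl ipC. Qed.
Lemma ipNr {R : rcfType} m n (M P : 'M[R]_(m, n)) : ip P (- M) = - ip P M.
Proof. by rewrite ipC ipNl ipC. Qed.

Lemma ip_ge0 {R : rcfType} m n (M : 'M[R]_(m, n)) : 0 <= ip M M.
Proof. by apply: sumr_ge0 => i _; apply: sumr_ge0 => j _; rewrite -expr2 sqr_ge0. Qed.

Lemma ip_eq0 {R : rcfType} m n (M : 'M[R]_(m, n)) : ip M M = 0 -> M = 0.
Proof.
move=> /eqP; rewrite /ip psumr_eq0; last first.
  by move=> i _; apply: sumr_ge0 => j _; rewrite -expr2 sqr_ge0.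
move=> /allP H; apply/matrixP => i j; rewrite mxE.
have := H i (mem_index_enum _); rewrite implyTb.
rewrite psumr_eq0; last by move=> k _; rewrite -expr2 sqr_ge0.
move=> /allP/(_ j (mem_index_enum _)).
by rewrite -expr2 sqrf_eq0 => /eqP.
Qed.

Lemma frob_ge0 {R : rcfType} m n (M : 'M[R]_(m, n)) : 0 <= frob M.
Proof. by rewrite frobE sqrtr_ge0. Qed.

Lemma frob_sqr {R : rcfType} m n (M : 'M[R]_(m, n)) : frob M ^+ 2 = ip M M.
Proof. by rewrite frobE sqr_sqrtr // ip_ge0. Qed.

Lemma ip_CS {R : rcfType} m n (M N : 'M[R]_(m, n)) : ip M N <= frob M * frob N.
Proof.
have [N0|nz] := eqVneq (ip N N) 0.
  by rewrite (ip_eq0 N0) ipC /ip big1 ?mulr_ge0 ?frob_ge0 // => i _;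
     rewrite big1 // => j _; rewrite mxE mul0r.
have pos : 0 < ip N N by rewrite lt_def nz ip_ge0.
have key : ip M N ^+ 2 <= ip M M * ip N N.
  pose t := ip M N / ip N N.
  have := ip_ge0 (M - t *: N).
  rewrite !(ipDl, ipDr, ipNl, ipNr, ipZl, ipZr) (ipC N M).
  have -> : ip M M - t * ip M N + (- (t * ip M N) - t * (- (t * ip N N)))
     = ip M M - ip M N ^+ 2 / ip N N.
    by rewrite /t; field; rewrite nz.
  rewrite subr_ge0 ler_pdivrMr //.
have: `|ip M N| <= frob M * frob N.
  rewrite -sqrtr_sqr !frobE -sqrtrM ?ip_ge0 //.
  by rewrite ler_sqrt // mulr_ge0 ?ip_ge0.
exact: le_trans (ler_norm _).
Qed.

Lemma frobD {R : rcfType} m n (M N : 'M[R]_(m, n)) : frob (M + N) <= frob M + frob N.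
Proof.
rewrite [frob (M + N)]frobE -[frob M + frob N]ger0_norm ?addr_ge0 ?frob_ge0 //.
rewrite -sqrtr_sqr ler_sqrt ?sqr_ge0 //.
rewrite !(ipDl, ipDr) (ipC N M) sqrrD !frob_sqr.
have := ip_CS M N; lra.
Qed.

Lemma frobN {R : rcfType} m n (M : 'M[R]_(m, n)) : frob (- M) = frob M.
Proof. by rewrite !frobE ipNl ipNr opprK. Qed.

Lemma frob_sum {R : rcfType} m n (r : seq nat) (F : nat -> 'M[R]_(m, n)) :
  frob (\sum_(k <- r) F k) <= \sum_(k <- r) frob (F k).
Proof.
elim: r => [|k r IH]; first by rewrite !big_nil frobE /ip big1 ?sqrtr0 // => i _;
  rewrite big1 // => j _; rewrite mxE mul0r.
by rewrite !big_cons (le_trans (frobD _ _)) // lerD2l.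
Qed.

Lemma ip_tr {R : rcfType} m n (M N : 'M[R]_(m, n)) : ip M^T N^T = ip M N.
Proof. by rewrite /ip exchange_big; do 2 (apply: eq_bigr => ? _); rewrite !mxE. Qed.

Lemma frob_tr {R : rcfType} m n (M : 'M[R]_(m, n)) : frob M^T = frob M.
Proof. by rewrite !frobE ip_tr. Qed.

Definition qf {R : rcfType} n (D : 'M[R]_n) (v : 'rV[R]_n) : R := ip (v *m D) v.

Lemma ip_trace {R : rcfType} m n (M N : 'M[R]_(m, n)) : ip M N = \tr (M *m N^T).
Proof. by rewrite /ip /mxtrace; apply: eq_bigr => i _; rewrite mxE; apply: eq_bigr => j _; rewrite mxE. Qed.

Lemma ip_mulmx_tr {R : rcfType} m n (X Y : 'M[R]_(m, n)) (D : 'M[R]_n) :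
  ip (X *m D) Y = ip X (Y *m D^T).
Proof. by rewrite !ip_trace trmx_mul trmxK mulmxA. Qed.

Lemma ip_rows {R : rcfType} m n (X Y : 'M[R]_(m, n)) :
  ip X Y = \sum_i ip (row i X) (row i Y).
Proof.
rewrite /ip; apply: eq_bigr => i _; rewrite big_ord1.
by apply: eq_bigr => j _; rewrite !mxE.
Qed.

Lemma ip_qf_rows {R : rcfType} m n (X : 'M[R]_(m, n)) (D : 'M[R]_n) :
  ip (X *m D) X = \sum_i qf D (row i X).
Proof. by rewrite ip_rows; apply: eq_bigr => i _; rewrite row_mul. Qed.

Lemma qf_lb_mx {R : rcfType} m n (X : 'M[R]_(m, n)) (D : 'M[R]_n) a :
  (forall v, a * ip v v <= qf D v) -> a * ip X X <= ip (X *m D) X.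
Proof.
move=> H; rewrite ip_qf_rows [ip X X]ip_rows mulr_sumr.
by apply: ler_sum => i _; apply: H.
Qed.

Lemma coerc {R : rcfType} n1 n2 (A1 : 'M[R]_n1) (A2 : 'M[R]_n2) a1 a2
    (X : 'M[R]_(n1, n2)) :
  A1^T = A1 -> (forall v, a1 * ip v v <= qf A1 v) ->
  (forall v, a2 * ip v v <= qf A2 v) ->
  (a1 + a2) * frob X <= frob (A1 *m X + X *m A2).
Proof.
move=> sA1 H1 H2.
have h1 : a1 * ip X X <= ip (A1 *m X) X.
  rewrite -ip_tr -[ip (A1 *m X) X]ip_tr trmx_mul sA1.
  exact: qf_lb_mx.
have h2 : a2 * ip X X <= ip (X *m A2) X by exact: qf_lb_mx.
have h3 := ip_CS (A1 *m X + X *m A2) X.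
rewrite ipDl in h3.
have [f0|fn0] := eqVneq (frob X) 0.
  by rewrite f0 mulr0 frob_ge0.
have fp : 0 < frob X by rewrite lt_def fn0 frob_ge0.
rewrite -(ler_pM2r fp) -mulrA -expr2 frob_sqr.
lra.
Qed.

Lemma polar {R : rcfType} n (D : 'M[R]_n) b : D^T = D -> 0 < b ->
  (forall v : 'rV[R]_n, - b * ip v v <= qf D v <= b * ip v v) ->
  forall v : 'rV[R]_n, ip (v *m D) (v *m D) <= b ^+ 2 * ip v v.
Proof.
move=> sD bp H v; set y := v *m D.
have e1 : ip (v *m D) y = ip y y by [].
have e2 : ip (y *m D) v = ip y y by rewrite ip_mulmx_tr sD.
have /andP[_ hp] := H (b *: v + y).
have /andP[hm _] := H (b *: v - y).
move: hp hm; rewrite /qf !(mulmxDl, mulmxBl) -!scalemxAl !mulNmx.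
rewrite !(ipDl, ipDr, ipNl, ipNr, ipZl, ipZr) -/y e2 (ipC v y).
move=> hp hm.
have : b * (ip y y - b ^+ 2 * ip v v) <= 0 by nra.
by rewrite pmulr_rle0 // subr_le0.
Qed.

Lemma sqr_le {R : rcfType} (x y : R) : 0 <= x -> 0 <= y -> x ^+ 2 <= y ^+ 2 -> x <= y.
Proof. move=> hx hy h; nra. Qed.

Lemma frob_mul_bound {R : rcfType} m n (X : 'M[R]_(m, n)) (D : 'M[R]_n) b :
  D^T = D -> 0 < b ->
  (forall v : 'rV[R]_n, - b * ip v v <= qf D v <= b * ip v v) ->
  frob (X *m D) <= b * frob X.
Proof.
move=> sD bp H.
have h : ip (X *m D) (X *m D) <= b ^+ 2 * ip X X.
  rewrite [ip (X *m D) _]ip_rows [ip X X]ip_rows mulr_sumr.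
  by apply: ler_sum => i _; rewrite row_mul; apply: polar.
apply: sqr_le; [exact: frob_ge0 | by rewrite mulr_ge0 ?frob_ge0 ?ltW |].
by rewrite exprMn !frob_sqr.
Qed.

Lemma sum_sel {R : rcfType} (s : seq nat) (x : nat) (F : nat -> R) :
  uniq s -> x \in s -> \sum_(c <- s) (if x == c then F c else 0) = F x.
Proof.
move=> us xs; rewrite (big_rem x) //= eqxx big_seq_cond big1 ?addr0 //.
move=> c /andP[]; rewrite mem_rem_uniq // => /andP[cx _] _.
by rewrite eq_sym (negPf cx).
Qed.

Lemma qf_sum {R : rcfType} n (D : 'M[R]_n) v :
  qf D v = \sum_k \sum_j v 0 k * D k j * v 0 j.
Proof.
rewrite /qf /ip big_ord1 exchange_big; apply: eq_bigr => j _.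
rewrite mxE mulr_suml; apply: eq_bigr => k _.
by [].
Qed.

Lemma ipv_sum {R : rcfType} n (v : 'rV[R]_n) : ip v v = \sum_k v 0 k * v 0 k.
Proof. by rewrite /ip big_ord1. Qed.

Definition vmask {R : rcfType} n (lab : 'I_n -> nat) (c : nat) (v : 'rV[R]_n) : 'rV[R]_n :=
  \row_j (if lab j == c then v 0 j else 0).

Lemma pinch {R : rcfType} n (lab : nat -> 'I_n -> nat) h (A : 'M[R]_n) a b :
  (forall v : 'rV[R]_n, a * ip v v <= qf A v <= b * ip v v) ->
  forall v : 'rV[R]_n, a * ip v v <= qf (bdiag lab h A) v <= b * ip v v.
Proof.
move=> H v.
set s := undup [seq lab h i | i <- enum 'I_n].
have us : uniq s by rewrite undup_uniq.
have ms : forall k, lab h k \in s.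
  by move=> k; rewrite mem_undup; apply: map_f; rewrite mem_enum.
have e1 : ip v v = \sum_(c <- s) ip (vmask (lab h) c v) (vmask (lab h) c v).
  rewrite ipv_sum; under [RHS]eq_bigr => c _ do rewrite ipv_sum.
  rewrite exchange_big; apply: eq_bigr => k _ /=.
  rewrite -(sum_sel (fun c => v 0 k * v 0 k) us (ms k)).
  by apply: eq_bigr => c _; rewrite !mxE; case: eqP; rewrite ?mul0r.
have e2 : qf (bdiag lab h A) v = \sum_(c <- s) qf A (vmask (lab h) c v).
  rewrite qf_sum; under [RHS]eq_bigr => c _ do rewrite qf_sum.
  rewrite [RHS]exchange_big; apply: eq_bigr => k _ /=.
  rewrite [RHS]exchange_big; apply: eq_bigr => j _ /=.
  pose F := fun c => if lab h j == c then v 0 k * A k j * v 0 j else 0.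
  rewrite (eq_bigr (fun c => if lab h k == c then F c else 0)); last first.
    by move=> c _; rewrite /F !mxE; case: eqP; case: eqP; rewrite ?mul0r ?mulr0.
  rewrite sum_sel // /F mxE eq_sym.
  by case: ifP; rewrite ?(mulr0, mul0r).
rewrite e1 e2 !mulr_sumr; apply/andP; split; apply: ler_sum => c _;
  by have /andP[] := H (vmask (lab h) c v).
Qed.

Lemma bdiag_sym {R : rcfType} n (lab : nat -> 'I_n -> nat) h (A : 'M[R]_n) :
  A^T = A -> (bdiag lab h A)^T = bdiag lab h A.
Proof.
move=> sA; apply/matrixP => i j; rewrite !mxE eq_sym.
by rewrite -{1}sA mxE.
Qed.

Local Open Scope sesquilinear_scope.

Lemma rayleigh {R : rcfType} n (A : 'M[R]_n) a b :
  A^T = A -> spectrum_in A a b ->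
  forall v : 'rV[R]_n, a * ip v v <= qf A v <= b * ip v v.
Proof.
move=> sA spA v.
pose f := real_complex R.
pose Ac := map_mx f A.
have Ar : Ac \is a realmx by apply/mxOverP => i j; rewrite mxE /f complex_real.
have As : Ac \is symmetricmx.
  apply/is_hermitianmxP; rewrite expr0 scale1r map_mx_id //.
  by rewrite /Ac map_trmx sA.
have Aherm := realsym_hermsym As Ar.
have /orthomx_spectralP eA := hermitian_normalmx Aherm.
set P := spectralmx Ac in eA; set d := spectral_diag Ac in eA.
have PU : P \is unitarymx := spectral_unitarymx Ac.
have PPt : P *m P^t* = 1%:M by apply/unitarymxP.
have PtP : P^t* *m P = 1%:M by apply: mulmx1C.
rewrite invmx_unitary // in eA.
have dreal : d \is a realmx := hermitian_spectral_diag_real Aherm.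
have deig : forall i, eigenvalue Ac (d 0 i).
  move=> i; apply/eigenvalueP; exists (row i P).
    rewrite eA !mulmxA -row_mul PPt row1 -rowE.
    by rewrite row_diag_mx -scalemxAl -rowE.
  apply/eqP => r0; have := PPt; move/(congr1 (row i)).
  rewrite row_mul r0 mul0mx row1 => /rowP/(_ i); rewrite !mxE eqxx /=.
  by rewrite eqxx => /eqP; rewrite eq_sym oner_eq0.
have dbd : forall i, f a <= d 0 i <= f b.
  move=> i; have dr : d 0 i \is Num.real by have /mxOverP := dreal; apply.
  have := deig i; rewrite -(RRe_real dr) eigenvalue_root_char -map_char_poly.
  rewrite fmorph_root -eigenvalue_root_char => /spA.
  by rewrite /f !lecR.
pose vc := map_mx f v.
have vct : vc^t* = map_mx f v^T.
  by apply/matrixP => i j; rewrite !mxE conj_Creal // /f complex_real.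
pose w := vc *m P^t*.
have wt : w^t* = P *m vc^t* by rewrite /w trmx_mul map_mxM trmxCK.
have t1 : forall (M : 'M[R]_1), \tr M = M 0 0 by move=> M; rewrite /mxtrace big_ord1.
have fM : forall x y, f (x * y) = f x * f y by move=> x y; exact: rmorphM.
have m00 : forall (M : 'M[R]_1), f (M 0 0) = (map_mx f M) 0 0 by move=> M; rewrite mxE.
have e1 : f (qf A v) = (w *m diag_mx d *m w^t*) 0 0.
  rewrite /qf ip_trace t1 m00 (map_mxM f) (map_mxM f) -vct -/vc -/Ac eA.
  by rewrite wt /w !mulmxA.
have e2 : f (ip v v) = (w *m w^t*) 0 0.
  rewrite ip_trace t1 m00 (map_mxM f) -vct -/vc wt /w.
  by rewrite -mulmxA [P^t* *m _]mulmxA PtP mul1mx.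
have s1 : forall j, 0 <= w 0 j * (w^t*) j 0.
  by move=> j; rewrite !mxE mul_conjC_ge0.
rewrite -[a * _ <= _]lecR -[_ <= b * _]lecR -/f !fM e1 e2.
clearbody w; rewrite mul_mx_diag !mxE !mulr_sumr.
have cw : forall j, 0 <= w 0 j * (w 0 j)^* by move=> j; exact: mul_conjC_ge0.
apply/andP; split; apply: ler_sum => j _; rewrite !mxE.
  rewrite [w 0 j * d 0 j]mulrC -mulrA.
  by rewrite ler_wpM2r //; case/andP: (dbd j).
rewrite [w 0 j * d 0 j]mulrC -mulrA.
by rewrite ler_wpM2r //; case/andP: (dbd j).
Qed.

Local Close Scope sesquilinear_scope.

Lemma zmod_id (V : zmodType) (Ld Lx Lx1 B S : V) :
  Lx1 = B + S -> Ld + Lx = B + ((Ld - (Lx1 - Lx)) + S).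
Proof.
move=> ->; apply/eqP; rewrite -subr_eq0 opprB !opprD !addrA.
rewrite !opprK addrK (addrAC (Ld + Lx) (- B)) (addrAC _ (- B)) subrK.
by rewrite (addrC Ld) addrK subrr.
Qed.

Lemma Xi_eq {R : rcfType} n1 n2 (a1h a1s : 'M[R]_n1) (a2h a2s : 'M[R]_n2) X :
  - ((a1h - a1s) *m X) - X *m (a2h - a2s)
  = (a1s *m X + X *m a2s) - (a1h *m X + X *m a2h).
Proof.
rewrite mulmxBl mulmxBr !opprB opprD addrACA.
by rewrite (addrC (a1s *m X)) (addrC (X *m a2s)).
Qed.

Lemma part1 {R : rcfType} (n1 n2 ell : nat)
    (lab1 : nat -> 'I_n1 -> nat) (lab2 : nat -> 'I_n2 -> nat)
    (A1 : 'M[R]_n1) (A2 : 'M[R]_n2) (B : 'M[R]_(n1, n2))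
    (Xl : 'M[R]_(n1, n2)) (dX : nat -> 'M[R]_(n1, n2)) :
  forall h, (h <= ell)%N ->
    bdiag lab1 h A1 *m Xtil ell Xl dX h + Xtil ell Xl dX h *m bdiag lab2 h A2
      = B + \sum_(h <= k < ell.+1) Resid lab1 lab2 A1 A2 B ell Xl dX k.
Proof.
suff H : forall j, (j <= ell)%N -> let h := (ell - j)%N in
    bdiag lab1 h A1 *m Xtil ell Xl dX h + Xtil ell Xl dX h *m bdiag lab2 h A2
      = B + \sum_(h <= k < ell.+1) Resid lab1 lab2 A1 A2 B ell Xl dX k.
  by move=> h hl; have := H (ell - h)%N (leq_subr _ _); rewrite subKn.
elim => [_|j IH hj] /=.
  rewrite subn0 /Xtil (big_geq (leqnn ell)) addr0 big_nat1 /Resid eqxx.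
  by rewrite [RHS]addrCA subrr addr0.
set h := (ell - j.+1)%N.
have hl : (h < ell)%N by rewrite /h; lia.
have eh : h.+1 = (ell - j)%N by rewrite /h; lia.
have := IH (ltnW hj); rewrite /= -eh => {}IH.
have -> : Xtil ell Xl dX h = dX h + Xtil ell Xl dX h.+1.
  by rewrite /Xtil (big_ltn hl) addrCA.
rewrite (big_ltn (leqW hl)) {1}/Resid (ltn_eqF hl) /Xitil Xi_eq.
rewrite mulmxDr mulmxDl addrACA.
exact: zmod_id.
Qed.

Lemma qfB {R : rcfType} n (M N : 'M[R]_n) v : qf (M - N) v = qf M v - qf N v.
Proof. by rewrite /qf mulmxBr ipDl ipNl. Qed.

Lemma diff_bound {R : rcfType} n (lab : nat -> 'I_n -> nat) (A : 'M[R]_n) a b h :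
  A^T = A -> spectrum_in A a b -> 0 < a ->
  forall v : 'rV[R]_n, - b * ip v v <= qf (bdiag lab h A - bdiag lab h.+1 A) v <= b * ip v v.
Proof.
move=> sA spA ap v.
have Q := rayleigh sA spA.
have /andP[l1 u1] := pinch lab h Q v.
have /andP[l2 u2] := pinch lab h.+1 Q v.
have g : 0 <= a * ip v v := mulr_ge0 (ltW ap) (ip_ge0 v).
rewrite qfB mulNr; apply/andP; split; lra.
Qed.

Lemma xi_bound {R : rcfType} n1 n2 (lab1 : nat -> 'I_n1 -> nat) (lab2 : nat -> 'I_n2 -> nat)
    (A1 : 'M[R]_n1) (A2 : 'M[R]_n2) a1 b1 a2 b2 h (X : 'M[R]_(n1, n2)) :
  A1^T = A1 -> A2^T = A2 -> spectrum_in A1 a1 b1 -> spectrum_in A2 a2 b2 ->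
  0 < a1 -> a1 <= b1 -> 0 < a2 -> a2 <= b2 ->
  frob (- ((bdiag lab1 h A1 - bdiag lab1 h.+1 A1) *m X)
        - X *m (bdiag lab2 h A2 - bdiag lab2 h.+1 A2))
   <= (b1 + b2) / (a1 + a2) *
      frob (bdiag lab1 h.+1 A1 *m X + X *m bdiag lab2 h.+1 A2).
Proof.
move=> sA1 sA2 sp1 sp2 a1p ab1 a2p ab2.
have b1p : 0 < b1 by apply: lt_le_trans ab1.
have b2p : 0 < b2 by apply: lt_le_trans ab2.
have sD1 : (bdiag lab1 h A1 - bdiag lab1 h.+1 A1)^T = bdiag lab1 h A1 - bdiag lab1 h.+1 A1.
  by rewrite linearB /= !bdiag_sym.
have sD2 : (bdiag lab2 h A2 - bdiag lab2 h.+1 A2)^T = bdiag lab2 h A2 - bdiag lab2 h.+1 A2.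
  by rewrite linearB /= !bdiag_sym.
have f1 : frob ((bdiag lab1 h A1 - bdiag lab1 h.+1 A1) *m X) <= b1 * frob X.
  rewrite -frob_tr trmx_mul sD1 -(frob_tr X).
  by apply: frob_mul_bound => //; exact: (diff_bound lab1 h sA1 sp1 a1p).
have f2 : frob (X *m (bdiag lab2 h A2 - bdiag lab2 h.+1 A2)) <= b2 * frob X.
  by apply: frob_mul_bound => //; exact: (diff_bound lab2 h sA2 sp2 a2p).
have c : (a1 + a2) * frob X <=
      frob (bdiag lab1 h.+1 A1 *m X + X *m bdiag lab2 h.+1 A2).
  apply: coerc; first by rewrite bdiag_sym.
    by move=> v; have /andP[] := pinch lab1 h.+1 (rayleigh sA1 sp1) v.
  by move=> v; have /andP[] := pinch lab2 h.+1 (rayleigh sA2 sp2) v.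
rewrite -opprD frobN (le_trans (frobD _ _)) //.
have ap : 0 < a1 + a2 by rewrite addr_gt0.
apply: (le_trans (lerD f1 f2)); rewrite -mulrDl.
have kp : 0 <= (b1 + b2) / (a1 + a2) by rewrite divr_ge0 // ltW // addr_gt0.
apply: le_trans (ler_wpM2l kp c).
by rewrite mulrA divfK // gt_eqF.
Qed.

Unset Implicit Arguments.

Theorem lemma3p1 (R : rcfType) (n1 n2 ell : nat)
    (lab1 : nat -> 'I_n1 -> nat) (lab2 : nat -> 'I_n2 -> nat)
    (A1 : 'M[R]_n1) (A2 : 'M[R]_n2) (B : 'M[R]_(n1, n2))
    (alpha1 beta1 alpha2 beta2 eps : R)
    (Xl : 'M[R]_(n1, n2)) (dX : nat -> 'M[R]_(n1, n2)) :
  nested_partitions ell lab1 -> nested_partitions ell lab2 ->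
  symmetric_mx A1 -> posdef_mx A1 -> symmetric_mx A2 -> posdef_mx A2 ->
  0 < alpha1 -> alpha1 <= beta1 -> 0 < alpha2 -> alpha2 <= beta2 ->
  spectrum_in A1 alpha1 beta1 -> spectrum_in A2 alpha2 beta2 ->
  0 < eps ->
  (beta1 + beta2) / (alpha1 + alpha2) * eps < 1 ->
  frob (Resid lab1 lab2 A1 A2 B ell Xl dX ell) <= eps * frob B ->
  (forall h, (h < ell)%N ->
     frob (Resid lab1 lab2 A1 A2 B ell Xl dX h)
       <= eps * frob (Xitil lab1 lab2 A1 A2 ell Xl dX h)) ->
  forall h, (h <= ell)%N ->
    bdiag lab1 h A1 *m Xtil ell Xl dX h + Xtil ell Xl dX h *m bdiag lab2 h A2
      = B + \sum_(h <= k < ell.+1) Resid lab1 lab2 A1 A2 B ell Xl dX k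
    /\ frob (Resid lab1 lab2 A1 A2 B ell Xl dX h)
       <= (beta1 + beta2) / (alpha1 + alpha2) * eps * (1 + eps)
          * (1 + (beta1 + beta2) / (alpha1 + alpha2) * eps)
              ^ (ell%:Z - h%:Z - 1)
          * frob B.
Proof.
move=> _ _ sA1 _ sA2 _ a1p ab1 a2p ab2 sp1 sp2 ep kep Rl Rh h hl.
split; first exact: part1.
set k := (beta1 + beta2) / (alpha1 + alpha2).
set r := fun j => frob (Resid lab1 lab2 A1 A2 B ell Xl dX j).
set b0 := frob B.
have b0p : 0 <= b0 by exact: frob_ge0.
have rp : forall j, 0 <= r j by move=> j; exact: frob_ge0.
have ap : 0 < alpha1 + alpha2 by rewrite addr_gt0.
have kge1 : 1 <= k by rewrite /k ler_pdivlMr // mul1r lerD.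
have kp : 0 <= k by apply: le_trans kge1.
have rb : forall j, (j < ell)%N ->
    r j <= k * eps * (b0 + \sum_(j.+1 <= i < ell.+1) r i).
  move=> j jl; apply: (le_trans (Rh j jl)); rewrite -mulrA [k * _]mulrC -mulrA.
  apply: ler_wpM2l; first exact: ltW.
  apply: (le_trans (xi_bound lab1 lab2 j (Xtil ell Xl dX j.+1) sA1 sA2 sp1 sp2 a1p ab1 a2p ab2)).
  rewrite [X in _ <= X]mulrC; apply: ler_wpM2l => //; rewrite (part1 lab1 lab2 A1 A2 B) //.
  apply: (le_trans (frobD _ _)); rewrite lerD2l; exact: frob_sum.
have Sb : forall j, (j <= ell)%N -> let h := (ell - j)%N in
    b0 + \sum_(h <= i < ell.+1) r i <= (1 + eps) * (1 + k * eps) ^+ j * b0.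
  elim => [_|j IH hj] /=.
    rewrite subn0 big_nat1 expr0 mulr1 mulrDl mul1r lerD2l; exact: Rl.
  set h' := (ell - j.+1)%N.
  have hl' : (h' < ell)%N by rewrite /h'; lia.
  have eh : h'.+1 = (ell - j)%N by rewrite /h'; lia.
  have := IH (ltnW hj); rewrite /= -eh => {}IH.
  rewrite (big_ltn (leqW hl')) addrCA.
  have := rb h' hl'.
  have kep0 : 0 <= k * eps by rewrite mulr_ge0 // ltW.
  set S := b0 + _ in IH *.
  move=> rh.
  apply: (le_trans (lerD rh (lexx S))).
  have -> : k * eps * S + S = (1 + k * eps) * S by rewrite mulrDl mul1r addrC.
  rewrite exprS.
  have -> : (1 + eps) * ((1 + k * eps) * (1 + k * eps) ^+ j) * b0
     = ((1 + eps) * (1 + k * eps) ^+ j * b0) * (1 + k * eps) by ring.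
  rewrite [_ * S]mulrC; apply: ler_wpM2r => //; by rewrite addr_ge0.
have [e|ne] := eqVneq h ell.
  rewrite e subrr sub0r exprN1.
  apply: (le_trans Rl).
  have q0 : 0 < 1 + k * eps by rewrite addr_gt0 // mulr_gt0 // (lt_le_trans ltr01 kge1).
  apply: ler_wpM2r => //.
  have -> : k * eps * (1 + eps) / (1 + k * eps) = eps + eps * (k - 1) / (1 + k * eps).
    by field; rewrite gt_eqF.
  by rewrite lerDl divr_ge0 ?(ltW q0) // mulr_ge0 ?(ltW ep) // subr_ge0.
have hl2 : (h < ell)%N by rewrite ltn_neqAle ne hl.
have -> : (ell%:Z - h%:Z - 1 = (ell - h.+1)%N%:Z)%R by lia.
rewrite -exprnP.
apply: (le_trans (rb h hl2)).
have := Sb (ell - h.+1)%N (leq_subr _ _); rewrite /= subKn // => Sh.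
have kep0 : 0 <= k * eps by rewrite mulr_ge0 // ltW.
apply: le_trans (ler_wpM2l kep0 Sh) _.
by rewrite !mulrA.
Qed.
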